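(* Let $m\ge1$, $n\ge1$, let $K\in\{\mathbb{R},\mathbb{C}\}$, and let $\mathcal{Z}$ be either $\mathbb{Z}^m$ or $\{t\in\mathbb{Z}^m\mid t\ge t_1\}$ for some $t_1\in\mathbb{Z}^m$. Let $T=(T^1,\dots,T^m)\in\mathbb{N}^m$, $T\ne0$. Let $A_\alpha\colon\mathcal{Z}\to\mathcal{M}_n(K)$, $\alpha\in\{1,\dots,m\}$, satisfy $$A_\alpha(t+1_\beta)A_\beta(t)=A_\beta(t+1_\alpha)A_\alpha(t),\quad \forall t\in\mathcal{Z},\ \forall\alpha,\beta,$$ and suppose each $A_\alpha$ is periodic of period $T$, i.e. $A_\alpha(t+T)=A_\alpha(t)$ for all $t\in\mathcal{Z}$. Let $C(t)=\chi(t+T,t)$ for $t\in\mathcal{Z}$. Then: (a) for every $\alpha$ and $k\in\mathbb{N}$, $C_{\alpha,k}(t+T)=C_{\alpha,k}(t)$ for all $t\in\mathcal{Z}$; (b) $\chi(t+T,s)=\chi(t,s)\,C(s)$ for all $t,s\in\mathcal{Z}$ with $t\ge s$; (c) for all $s\in\mathcal{Z}$, $$C(s)=\left[\prod_{\alpha=1}^{m-1}C_{\alpha,T^\alpha}(s^1,\dots,s^\alpha,s^{\alpha+1}+T^{\alpha+1},\dots,s^m+T^m)\right]C_{m,T^m}(s^1,\dots,s^m),$$ where the product is ordered with $\alpha=1$ leftmost.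
   Context: $\mathbb{N}=\{0,1,2,\dots\}$; $1_\alpha\in\mathbb{Z}^m$ has $1$ in position $\alpha$ and $0$ elsewhere; $s\le t$ in $\mathbb{Z}^m$ means $s^\alpha\le t^\alpha$ for all $\alpha$. $C_{\alpha,0}(t)=I_n$ and $C_{\alpha,k}(t)=A_\alpha(t+(k-1)1_\alpha)\cdots A_\alpha(t+1_\alpha)A_\alpha(t)$ for $k\ge1$. Under the compatibility relations, for each $s\in\mathcal{Z}$ there is a unique $\chi(\cdot,s)\colon\{t\in\mathcal{Z}\mid t\ge s\}\to\mathcal{M}_n(K)$ with $\chi(s,s)=I_n$ and $\chi(t+1_\alpha,s)=A_\alpha(t)\chi(t,s)$ for all $t\ge s$ and all $\alpha$ (the transition matrix). *)

(* Defs.v *)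
From HB Require Import structures.
From mathcomp Require Import all_boot all_order all_algebra.
Set Implicit Arguments. Unset Strict Implicit. Unset Printing Implicit Defensive.
Import Order.TTheory GRing.Theory Num.Theory.
Local Open Scope ring_scope.

(* Points of Z^m, indexed by 'I_m (coordinate alpha = 1..m in the paper is
   the ordinal alpha-1 here). *)
Notation pt m := {ffun 'I_m -> int}.

Definition vadd m (s t : pt m) : pt m := [ffun b => s b + t b].
Definition unitv m (a : 'I_m) : pt m := [ffun b => ((b == a) : nat)%:Z].
Definition natv m (T : 'I_m -> nat) : pt m := [ffun b => (T b)%:Z].
Definition leV m (s t : pt m) : Prop := forall b, s b <= t b.

(* The domain Z: None encodes Z^m, Some t1 encodes {t in Z^m | t >= t1}. *)
Definition inZ m (dom : option (pt m)) (t : pt m) : Prop :=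
  match dom with None => True | Some t1 => leV t1 t end.

Fixpoint Cak (K : nzRingType) m n (A : 'I_m -> pt m -> 'M[K]_n)
    (a : 'I_m) (k : nat) (t : pt m) : 'M[K]_n :=
  match k with
  | 0 => 1%:M
  | k'.+1 => A a (vadd t [ffun b => (k' * (b == a))%:Z]) *m Cak A a k' t
  end.

Definition shiftAfter m (s : pt m) (T : 'I_m -> nat) (a : 'I_m) : pt m :=
  [ffun b : 'I_m => if (a < b)%N then s b + (T b)%:Z else s b].

(* Main.v *)
Require Import Defs.
From HB Require Import structures.
From mathcomp Require Import all_boot all_order all_algebra.
From mathcomp Require Import zify.
Set Implicit Arguments. Unset Strict Implicit.
Import Order.TTheory GRing.Theory Num.Theory.
Local Open Scope ring_scope.

Section P.
Variables (K : numFieldType) (m n : nat) (dom : option (pt m)) (A : 'I_m -> pt m -> 'M[K]_n)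
  (chi : pt m -> pt m -> 'M[K]_n).
Hypothesis chi0 : forall s, inZ dom s -> chi s s = 1%:M.
Hypothesis chiS : forall s t a, inZ dom s -> leV s t ->
     chi (vadd t (unitv a)) s = A a t *m chi t s.

Lemma inZ_le s t : inZ dom s -> leV s t -> inZ dom t.
Proof. case: dom => //= t1 H1 H2 b; exact: le_trans (H1 b) (H2 b). Qed.

Definition lin (a : 'I_m) (k : nat) : pt m := [ffun b => (k * (b == a))%:Z].

Lemma leV_add (s r w : pt m) : leV s r -> (forall b, 0 <= w b) -> leV s (vadd r w).
Proof. move=> H Hw b; rewrite ffunE; have := H b; have := Hw b; lia. Qed.

Lemma L1 s r a k : inZ dom s -> leV s r ->
  chi (vadd r (lin a k)) s = Cak A a k r *m chi r s.
Proof.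
move=> Hs Hr; elim: k => [|k IH].
  rewrite /= mul1mx; congr chi; apply/ffunP=> b; by rewrite !ffunE mul0n addr0.
have -> : vadd r (lin a k.+1) = vadd (vadd r (lin a k)) (unitv a).
  apply/ffunP=> b; rewrite !ffunE; case: eqP => _ /=; lia.
rewrite chiS //; last by apply: leV_add => // b; rewrite ffunE; lia.
by rewrite IH mulmxA.
Qed.

Definition Q (r : pt m) (d : 'I_m -> nat) (j : nat) : pt m :=
  [ffun b : 'I_m => if (j <= b)%N then r b + (d b)%:Z else r b].

Definition G r d (i : nat) : 'M[K]_n :=
  oapp (fun a => Cak A a (d a) (Q r d i.+1)) 1%:M (insub i).

Lemma leVQ s r d j : leV s r -> leV s (Q r d j).
Proof. move=> H b; rewrite ffunE; have := H b; case: ifP => _; lia. Qed.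

Lemma L2 s r d k j : inZ dom s -> leV s r -> (j + k = m)%N ->
  chi (Q r d j) s = (\big[mulmx/1%:M]_(j <= i < m) G r d i) *m chi r s.
Proof.
move=> Hs Hr; elim: k j => [|k IH] j Hj.
  rewrite addn0 in Hj; subst j; rewrite big_geq // mul1mx; congr chi.
  apply/ffunP=> b; rewrite ffunE; have := ltn_ord b; case: ifP => //; lia.
have jm : (j < m)%N by lia.
rewrite big_ltn // -mulmxA -IH; last by lia.
rewrite {1}/G; have -> : insub j = Some (Ordinal jm) :> option 'I_m by exact: (valK (Ordinal jm)).
rewrite /=.
have -> : Q r d j = vadd (Q r d j.+1) (lin (Ordinal jm) (d (Ordinal jm))).
  apply/ffunP=> b; rewrite !ffunE; case: eqP => [->|/eqP Hb] /=; rewrite ?leqnn ?ltnn.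
    lia.
  have : (val b != j) by apply: contra Hb => /eqP Hb; apply/eqP/val_inj.
  case: (ltngtP j b) => //; lia.
by rewrite L1 //; apply: leVQ.
Qed.

Lemma bigG r d :
  \big[mulmx/1%:M]_(0 <= i < m) G r d i =
  \big[mulmx/1%:M]_(a < m) Cak A a (d a) (Q r d a.+1).
Proof. by rewrite big_mkord; apply: eq_bigr => a _; rewrite /G valK. Qed.

End P.

Theorem proposition2p16 (K : numFieldType) (m n : nat)
    (dom : option (pt m)) (T : 'I_m -> nat)
    (A : 'I_m -> pt m -> 'M[K]_n)
    (chi : pt m -> pt m -> 'M[K]_n) :
  (0 < m)%N -> (0 < n)%N ->
  (exists a, T a != 0%N) ->
  (* compatibility relations *)
  (forall t a b, inZ dom t ->
     A a (vadd t (unitv b)) *m A b t = A b (vadd t (unitv a)) *m A a t) ->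
  (* periodicity of period T *)
  (forall a t, inZ dom t -> A a (vadd t (natv T)) = A a t) ->
  (* chi is the transition matrix *)
  (forall s, inZ dom s -> chi s s = 1%:M) ->
  (forall s t a, inZ dom s -> leV s t ->
     chi (vadd t (unitv a)) s = A a t *m chi t s) ->
  let C := fun t => chi (vadd t (natv T)) t in
  (* (a) *)
  (forall a k t, inZ dom t -> Cak A a k (vadd t (natv T)) = Cak A a k t) /\
  (* (b) *)
  (forall t s, inZ dom s -> leV s t ->
     chi (vadd t (natv T)) s = chi t s *m C s) /\
  (* (c) *)
  (forall s, inZ dom s ->
     C s = \big[mulmx/1%:M]_(a < m) Cak A a (T a) (shiftAfter s T a)).
Proof.
move=> _ _ _ _ Hper H0 HS C.
have Ha : forall a k t, inZ dom t -> Cak A a k (vadd t (natv T)) = Cak A a k t.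
  move=> a k t Ht; elim: k => [//|k IH] /=; rewrite IH.
  have -> : vadd (vadd t (natv T)) [ffun b => (k * (b == a))%:Z]
          = vadd (vadd t [ffun b => (k * (b == a))%:Z]) (natv T).
    apply/ffunP=> b; rewrite !ffunE; lia.
  rewrite Hper //; apply: (inZ_le Ht); apply: leV_add => b; first lia.
  rewrite ffunE; lia.
have HsT : forall s, leV s (vadd s (natv T)).
  by move=> s; apply: leV_add => b; rewrite ?ffunE; lia.
split; first exact: Ha.
split.
  move=> t s Hs Hst.
  pose d := fun b => `|t b - s b|%N.
  have Et : t = Q s d 0.
    apply/ffunP=> b; rewrite ffunE /= /d; have := Hst b; lia.
  have EtT : vadd t (natv T) = Q (vadd s (natv T)) d 0.
    apply/ffunP=> b; rewrite !ffunE /= /d; have := Hst b; lia.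
  rewrite EtT (@L2 _ _ _ _ _ _ HS _ _ _ m 0) // ?HsT // /C.
  rewrite {1}Et (@L2 _ _ _ _ _ _ HS _ _ _ m 0) // ?H0 // mulmx1; congr mulmx.
  apply: eq_bigr => i _; rewrite /G; case: insub => [a|] //=.
  have -> : Q (vadd s (natv T)) d i.+1 = vadd (Q s d i.+1) (natv T).
    apply/ffunP=> b; rewrite !ffunE; case: ifP => _; lia.
  by rewrite Ha //; apply: (inZ_le Hs); apply: leVQ.
move=> s Hs; rewrite /C.
have -> : vadd s (natv T) = Q s T 0 by apply/ffunP=> b; rewrite !ffunE.
rewrite (@L2 _ _ _ _ _ _ HS _ _ _ m 0) // H0 // mulmx1 bigG.
apply: eq_bigr => a _; congr Cak.
Qed.
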